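(* Let $(J,W)$ be a graphon with a graphon automorphism $\varphi$, and let $u(t)$ be a trajectory of the Kuramoto graphon system $\dot u_x=\int_J W(x,y)\sin(u_y-u_x)\,d\mu(y)$ on $L^1(J)$ with $\varphi^*(u(0))=u(0)$, where $\varphi^*v=v\circ\varphi$. Let $(W^{(n)})_n$ be graphons on $J$ and $u^{(n)}(t)$ trajectories of $\dot u_x=\int_J W^{(n)}(x,y)\sin(u_y-u_x)\,d\mu(y)$ such that \[ \lim_{n\to\infty}\|W^{(n)}-W\|_{\infty\to1}=0,\qquad\lim_{n\to\infty}\|u^{(n)}(0)-u(0)\|_1=0. \] Then for every $t\in\mathbb{R}$, $\lim_{n\to\infty}\|\varphi^*(u^{(n)}(t))-u^{(n)}(t)\|_1=0$, and the convergence is uniform in $t$ on every compact interval $[-T,T]$.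
   Context: A graphon $(J,W)$ is a probability space $J=(\Omega,\mathcal A,\mu)$ with a symmetric measurable $W:\Omega\times\Omega\to[0,1]$. A graphon automorphism is an invertible measure preserving $\varphi:J\to J$ such that for every $x$ and almost every $y$, $W(\varphi(x),\varphi(y))=W(x,y)$. $\|K\|_{\infty\to1}=\sup_{\|h\|_{L^\infty}\le1}\int_J\big|\int_J K(x,y)h(y)\,d\mu(y)\big|\,d\mu(x)$. *)

(* Defs.v *)
From HB Require Import structures.
From mathcomp Require Import all_boot all_order all_algebra.
From mathcomp Require Import all_classical all_reals all_analysis.
Set Implicit Arguments. Unset Strict Implicit. Unset Printing Implicit Defensive.
Import Order.TTheory GRing.Theory Num.Theory.
Import numFieldNormedType.Exports.
Local Open Scope classical_set_scope.
Local Open Scope ring_scope.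

Section Graphon.
Context {R : realType} {d : measure_display} {T : measurableType d}.
Variable mu : probability T R.

Definition is_graphon (W : T * T -> R) : Prop :=
  measurable_fun setT W /\
  (forall x y, W (x, y) = W (y, x)) /\
  (forall x y, 0 <= W (x, y) <= 1).

Definition inv_measure_preserving (phi : T -> T) : Prop :=
  (exists psi : T -> T, cancel phi psi /\ cancel psi phi /\
     measurable_fun setT psi) /\
  measurable_fun setT phi /\
  (forall A, measurable A -> mu (phi @^-1` A) = mu A).

Definition graphon_automorphism (W : T * T -> R) (phi : T -> T) : Prop :=
  inv_measure_preserving phi /\
  (forall x, {ae mu, forall y, W (phi x, phi y) = W (x, y)}).

Definition kuramoto_field (W : T * T -> R) (v : T -> R) : T -> R :=
  fun x => Rintegral mu setT (fun y => W (x, y) * sin (v y - v x)).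

Definition L1dist (f g : T -> R) : \bar R :=
  (\int[mu]_x (`|f x - g x|)%:E)%E.

(* u : R -> L^1(J) is a trajectory (C^1 solution in L^1(J)) of
   du/dt = F_W(u): each u t is integrable and the L^1 difference quotient
   converges to F_W(u t). *)
Definition kuramoto_trajectory (W : T * T -> R) (u : R -> T -> R) : Prop :=
  (forall t, mu.-integrable setT (EFin \o u t)) /\
  (forall t,
     (fun h : R => (\int[mu]_x
        (`|(u (t + h) x - u t x) / h - kuramoto_field W (u t) x|)%:E)%E)
       @ 0^' --> 0%E).

Definition cut_norm_inf1 (K : T * T -> R) : \bar R :=
  ereal_sup [set (\int[mu]_x `| \int[mu]_y (K (x, y) * h y)%:E |)%E
            | h in [set h : T -> R | measurable_fun setT h /\
                                     forall y, `|h y| <= 1]].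

End Graphon.

(* Main.v *)
Require Import Defs.
From HB Require Import structures.
From mathcomp Require Import all_boot all_order all_algebra.
From mathcomp Require Import all_classical all_reals all_analysis.
From mathcomp Require Import ring lra measurable_realfun.
Set Implicit Arguments. Unset Strict Implicit. Unset Printing Implicit Defensive.
Import Order.TTheory GRing.Theory Num.Theory.
Import numFieldNormedType.Exports.
Local Open Scope classical_set_scope.
Local Open Scope ring_scope.
Section Gron.
Context {R : realType}.

Lemma gronwall_fwd (f : R -> R) (K c : R) : 0 <= K -> 0 < c ->
  (forall t, 0 <= f t) ->
  (forall t e, 0 < e -> exists2 eta, 0 < eta & forall h, `|h| < eta ->
      `|f (t + h) - f t| <= `|h| * (K * f t + c + e)) ->
  forall t0, 0 <= t0 -> f t0 <= (f 0 + 2 * c) * expR ((K + 1) * t0).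
Proof.
move=> K0 c0 f0 Hf t0 t00.
set y := fun s => (f 0 + 2 * c) * expR ((K + 1) * s).
have yge s : 0 <= s -> f 0 + 2 * c <= y s.
  move=> s0; have := f0 0; move=> ?; rewrite /y ler_peMr //; first lra.
  have H := expR_ge1Dx ((K + 1) * s).
  have : 0 <= (K + 1) * s by rewrite mulr_ge0 // addr_ge0.
  lra.
have ymono s r : s <= r -> y s <= y r.
  move=> sr; rewrite /y; apply: ler_wpM2l; first by have := f0 0; lra.
  by rewrite ler_expR ler_wpM2l // addr_ge0.
have ystep s h : 0 <= h -> y s * (1 + (K + 1) * h) <= y (s + h).
  move=> h0; rewrite /y [(K + 1) * (s + h)]mulrDr expRD -mulrA; apply: ler_wpM2l.
    by have := f0 0; lra.
  apply: ler_wpM2l; first exact: expR_ge0.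
  exact: expR_ge1Dx.
pose S := [set s | 0 <= s <= t0 /\ forall r, 0 <= r <= s -> f r <= y r].
have S0 : S 0.
  split; first by rewrite lexx.
  move=> r /andP[r0 r0']; have -> : r = 0 by apply/eqP; rewrite eq_le r0 r0'.
  rewrite /y mulr0 expR0 mulr1 lerDl mulr_ge0 // ltW //.
have hS : has_sup S.
  split; first by exists 0.
  by exists t0 => s [/andP[_ ?] _].
set s := sup S.
have s0 : 0 <= s by apply: sup_upper_bound.
have st0 : s <= t0 by apply: ge_sup; [exists 0 | move=> r [/andP[_ ?] _]].
have Ss : S s.
  split; first by rewrite s0 st0.
  move=> r /andP[r0 rs].
  have [rlt|req] := ltrP r s.
    have sr0 : 0 < s - r by rewrite subr_gt0.
    have [e Se he] := sup_adherent sr0 hS.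
    by case: Se => _; apply; rewrite r0 /=; rewrite -/s in he; lra.
  have -> : r = s by apply/eqP; rewrite eq_le rs req.
  have [s00|s0p] := eqVneq s 0.
    by rewrite s00; case: S0 => _; apply; rewrite lexx.
  have sp : 0 < s by rewrite lt_neqAle eq_sym s0p s0.
  have [eta eta0 Heta] := Hf s 1 ltr01.
  set M := K * f s + c + 1.
  have M0 : 0 < M by rewrite /M; have := f0 s; nra.
  apply/ler_addgt0Pr => e e0.
  pose dl := Num.min (Num.min (eta / 2) (s / 2)) (e / (M + 1)).
  have M1 : 0 < M + 1 by lra.
  have q1 : 0 < eta / 2 by rewrite divr_gt0.
  have q2 : 0 < s / 2 by rewrite divr_gt0.
  have q3 : 0 < e / (M + 1) by rewrite divr_gt0.
  have dl0 : 0 < dl by rewrite /dl !lt_min q1 q2 q3.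
  have dl1 : dl <= eta / 2 by rewrite /dl !ge_min lexx.
  have dl2 : dl <= s / 2 by rewrite /dl !ge_min lexx orbT.
  have dl3 : dl <= e / (M + 1) by rewrite /dl ge_min lexx orbT.
  have H1 := Heta (- dl).
  rewrite normrN gtr0_norm // in H1.
  have /H1 H2 : dl < eta by lra.
  have Hr : f (s - dl) <= y (s - dl).
    have [e' Se' he'] := sup_adherent dl0 hS.
    case: Se' => /andP[e'0 _]; apply; rewrite -/s in he'.
    apply/andP; split; lra.
  have := ymono (s - dl) s; have : s - dl <= s by lra.
  move=> H3 /(_ H3) H4.
  have H5 : dl * M <= e.
    have : dl * (M + 1) <= e.
      have := ler_wpM2r (ltW M1) dl3; rewrite divfK //; exact: lt0r_neq0.
    nra.
  rewrite /M in H2 H5.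
  move: H2; rewrite ler_norml => /andP[H6 _].
  lra.
have ss : s = t0.
  apply/eqP; rewrite eq_le st0 /=; rewrite leNgt; apply/negP => st.
  have c2 : 0 < c / 2 by rewrite divr_gt0.
  have [eta eta0 Heta] := Hf s (c / 2) c2.
  pose h := Num.min (eta / 2) (t0 - s).
  have q1 : 0 < eta / 2 by rewrite divr_gt0.
  have q2 : 0 < t0 - s by rewrite subr_gt0.
  have h0 : 0 < h by rewrite /h lt_min q1 q2.
  have h1 : h <= eta / 2 by rewrite ge_min lexx.
  have h2 : h <= t0 - s by rewrite ge_min lexx orbT.
  have : S (s + h).
    split; first by apply/andP; split; lra.
    move=> r /andP[r0 rsh].
    have [rs|sr] := lerP r s; first by case: Ss => _; apply; rewrite r0.
    have hr0 : 0 < r - s by lra.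
    have := Heta (r - s); rewrite gtr0_norm //.
    have /[swap]/[apply] : r - s < eta by lra.
    rewrite (addrC s) subrK => Hb.
    move: Hb; rewrite ler_norml => /andP[_ Hb2].
    have Hys := yge s s0.
    have Hfs : f s <= y s by case: Ss => _; apply; rewrite s0 lexx.
    have := ystep s (r - s) (ltW hr0); rewrite (addrC s) subrK => Hst.
    have Kf : K * f s <= K * y s by rewrite ler_wpM2l.
    have f00 := f0 0.
    have : (r - s) * (K * f s + c + c / 2) <= (r - s) * ((K + 1) * y s).
      rewrite ler_wpM2l ?ltW //; lra.
    nra.
  move=> /sup_upper_bound; move=> /(_ hS) /=; rewrite -/s; lra.
by case: Ss => _; apply; rewrite -ss s0 lexx.
Qed.

Lemma gronwall (f : R -> R) (K c : R) : 0 <= K -> 0 < c ->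
  (forall t, 0 <= f t) ->
  (forall t e, 0 < e -> exists2 eta, 0 < eta & forall h, `|h| < eta ->
      `|f (t + h) - f t| <= `|h| * (K * f t + c + e)) ->
  forall t, f t <= (f 0 + 2 * c) * expR ((K + 1) * `|t|).
Proof.
move=> K0 c0 f0 Hf t.
have [t0|t0] := leP 0 t.
  by rewrite ger0_norm //; exact: gronwall_fwd.
pose g := fun s => f (- s).
have g0 : forall s, 0 <= g s by move=> s; exact: f0.
have Hg : forall s e, 0 < e -> exists2 eta, 0 < eta & forall h, `|h| < eta ->
      `|g (s + h) - g s| <= `|h| * (K * g s + c + e).
  move=> s e e0; have [eta eta0 He] := Hf (- s) e e0.
  exists eta => // h hl.
  have := He (- h); rewrite normrN => /(_ hl).
  by rewrite /g opprD.
have mt : 0 <= - t by rewrite oppr_ge0 ltW.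
have := gronwall_fwd K0 c0 g0 Hg mt.
rewrite /g opprK oppr0 ltr0_norm //.
Qed.
End Gron.

Section M.
Context {R : realType} {d : measure_display} {T : measurableType d}.
Variable mu : probability T R.

Lemma bint (f : T -> R) M : measurable_fun setT f -> (forall x, `|f x| <= M) ->
  mu.-integrable setT (EFin \o f).
Proof.
move=> mf fM; apply: measurable_bounded_integrable => //.
  exact: (le_lt_trans (probability_le1 mu measurableT) (ltry 1)).
exists M; split; first exact: num_real.
by move=> M' MM' x _; apply: le_trans (fM x) _; exact: ltW.
Qed.

Lemma prod_fin : (((mu \x mu)%E) [set: T * T] < +oo)%E.
Proof.
have := product_measure1E mu mu measurableT measurableT.
rewrite setXTT. move=> ->.
have h1 : (mu setT < +oo)%E := le_lt_trans (probability_le1 mu measurableT) (ltry 1).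
by rewrite lte_mul_pinfty // ge0_fin_numE.
Qed.

Lemma mRint (f : T * T -> R) M : measurable_fun setT f -> (forall p, `|f p| <= M) ->
  measurable_fun setT (fun x => \int[mu]_y f (x, y)).
Proof.
move=> mf fM.
have imf : ((mu \x mu)%E).-integrable setT (EFin \o f).
  apply: measurable_bounded_integrable => //.
    exact: prod_fin.
  exists M; split; first exact: num_real.
  by move=> M' MM' x _; apply: le_trans (fM x) _; exact: ltW.
have := measurable_fubini_F imf.
rewrite /fubini_F => mF.
exact: (measurableT_comp (fine_measurable measurableT) mF).
Qed.

Lemma Rint_bound (f : T -> R) M : measurable_fun setT f -> (forall x, `|f x| <= M) ->
  `|\int[mu]_y f y| <= M.
Proof.
move=> mf fM.
have M0 : 0 <= M by apply: le_trans (fM point).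
apply: le_trans (le_normr_Rintegral _ (bint mf fM)) _ => //.
apply: le_trans (le_Rintegral _ _ _ (fun x _ => fM x)) _ => //.
- apply: (@bint _ M); first by apply: measurableT_comp.
  by move=> x; rewrite normr_id.
- by apply: (@bint _ M) => // x; rewrite ger0_norm.
rewrite Rintegral_cst // [fine _](_ : _ = 1) ?mulr1 //.
exact: (f_equal fine (probability_setT mu)).
Qed.

Lemma sin_lip (x y : R) : `|sin x - sin y| <= `|x - y|.
Proof.
wlog xy : x y / x <= y.
  move=> H; have [/H//|/ltW/H] := leP x y.
  by rewrite distrC (distrC x).
have [->|xy'] := eqVneq x y; first by rewrite !subrr normr0.
have lt : x < y by rewrite lt_neqAle xy' xy.
have cs : {within `[x, y], continuous (@sin R)}.
  by apply: continuous_subspaceT; exact: continuous_sin.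
have [c _ Hc] := MVT lt (fun c _ => is_derive_sin c) cs.
rewrite distrC Hc normrM distrC.
by rewrite ler_piMl // cos_max.
Qed.

Lemma mkerf (K : T * T -> R) (v : T -> R) : measurable_fun setT K ->
  measurable_fun setT v -> measurable_fun setT (fun p => K p * sin (v p.2 - v p.1)).
Proof.
move=> mK mv; apply: measurable_funM => //.
apply: measurableT_comp; first by apply: continuous_measurable_fun; exact: continuous_sin.
apply: measurable_funB.
  by apply: measurableT_comp => //; exact: measurable_snd.
by apply: measurableT_comp => //; exact: measurable_fst.
Qed.

Lemma kerb (K : T * T -> R) M (v : T -> R) p : (forall p, `|K p| <= M) ->
  `|K p * sin (v p.2 - v p.1)| <= M.
Proof.
move=> KM; rewrite normrM.
have M0 : 0 <= M by apply: le_trans (KM p).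
by rewrite -[M]mulr1 ler_pM // sin_max.
Qed.

Lemma Fmeas (K : T * T -> R) M (v : T -> R) : measurable_fun setT K ->
  (forall p, `|K p| <= M) -> measurable_fun setT v ->
  measurable_fun setT (kuramoto_field mu K v).
Proof.
move=> mK KM mv.
exact: (mRint (mkerf mK mv) (fun p => kerb v p KM)).
Qed.

Lemma msec (K : T * T -> R) (v : T -> R) x : measurable_fun setT K ->
  measurable_fun setT v -> measurable_fun setT (fun y => K (x, y) * sin (v y - v x)).
Proof. by move=> mK mv; exact: (measurable_fun_pair2 x (mkerf mK mv)). Qed.

Lemma isec (K : T * T -> R) M (v : T -> R) x : measurable_fun setT K ->
  (forall p, `|K p| <= M) -> measurable_fun setT v ->
  mu.-integrable setT (EFin \o (fun y => K (x, y) * sin (v y - v x))).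
Proof.
move=> mK KM mv; apply: (@bint _ M); first exact: msec.
by move=> y; exact: (kerb v (x, y) KM).
Qed.

Lemma Fbnd (K : T * T -> R) M (v : T -> R) x : measurable_fun setT K ->
  (forall p, `|K p| <= M) -> measurable_fun setT v ->
  `|kuramoto_field mu K v x| <= M.
Proof.
move=> mK KM mv; apply: Rint_bound; first exact: msec.
by move=> y; exact: (kerb v (x, y) KM).
Qed.

Lemma Flin (K1 K2 : T * T -> R) M (v : T -> R) x : measurable_fun setT K1 ->
  measurable_fun setT K2 -> (forall p, `|K1 p| <= M) -> (forall p, `|K2 p| <= M) ->
  measurable_fun setT v ->
  kuramoto_field mu K1 v x - kuramoto_field mu K2 v x =
  kuramoto_field mu (fun p => K1 p - K2 p) v x.
Proof.
move=> mK1 mK2 K1M K2M mv.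
rewrite /kuramoto_field -RintegralB //; [|exact: isec K1M mv|exact: isec K2M mv].
by apply: eq_Rintegral => y _; rewrite mulrBl.
Qed.

Lemma Fae (K1 K2 : T * T -> R) M (v : T -> R) x : measurable_fun setT K1 ->
  measurable_fun setT K2 -> (forall p, `|K1 p| <= M) -> (forall p, `|K2 p| <= M) ->
  measurable_fun setT v ->
  {ae mu, forall y, K1 (x, y) = K2 (x, y)} ->
  kuramoto_field mu K1 v x = kuramoto_field mu K2 v x.
Proof.
move=> mK1 mK2 K1M K2M mv hae.
rewrite /kuramoto_field /Rintegral; congr fine.
apply: ae_eq_integral => //.
- by apply/measurable_EFinP; exact: msec.
- by apply/measurable_EFinP; exact: msec.
by apply: filterS hae => y /= -> _.
Qed.

Lemma Flip (K : T * T -> R) (v1 v2 : T -> R) x : measurable_fun setT K ->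
  (forall p, `|K p| <= 1) -> measurable_fun setT v1 -> measurable_fun setT v2 ->
  mu.-integrable setT (EFin \o (fun y => v1 y - v2 y)) ->
  `|kuramoto_field mu K v1 x - kuramoto_field mu K v2 x| <=
  \int[mu]_y `|v1 y - v2 y| + `|v1 x - v2 x|.
Proof.
move=> mK KM mv1 mv2 i12.
rewrite /kuramoto_field -RintegralB //; [|exact: isec KM mv1|exact: isec KM mv2].
have i12n := integrable_norm i12.
have ic : mu.-integrable setT (EFin \o (fun _ : T => `|v1 x - v2 x|)).
  by apply: (@bint _ `|v1 x - v2 x|) => // y; rewrite normr_id.
have mdiff : measurable_fun setT (fun y => K (x, y) * sin (v1 y - v1 x) -
     K (x, y) * sin (v2 y - v2 x)).
  by apply: measurable_funB; exact: msec.
apply: le_trans (le_normr_Rintegral _ _) _ => //.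
  apply: (@bint _ 2) => // y.
  apply: le_trans (ler_normB _ _) _.
  by rewrite -[2]/(1 + 1) lerD // (kerb _ (x, y) KM).
apply: le_trans (le_Rintegral _ _ _ (f2 := fun y => `|v1 y - v2 y| + `|v1 x - v2 x|) _) _ => //.
- apply: (@bint _ 2); first by apply: measurableT_comp.
  move=> y; rewrite normr_id.
  apply: le_trans (ler_normB _ _) _.
  by rewrite -[2]/(1 + 1) lerD // (kerb _ (x, y) KM).
- exact: (integrableD measurableT i12n ic).
- move=> y _; rewrite -mulrBr normrM.
  apply: le_trans (ler_pM _ _ (KM (x, y)) (sin_lip _ _)) _ => //.
  rewrite mul1r.
  have -> : v1 y - v1 x - (v2 y - v2 x) = (v1 y - v2 y) - (v1 x - v2 x) by ring.
  exact: ler_normB.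
rewrite RintegralD //.
rewrite Rintegral_cst // [fine _](_ : _ = 1) ?mulr1 //.
exact: (f_equal fine (probability_setT mu)).
Qed.


Definition Sf (L : T * T -> R) (h : T -> R) (x : T) := \int[mu]_y (L (x, y) * h y).

Lemma mSf (L : T * T -> R) (h : T -> R) : measurable_fun setT L ->
  (forall p, `|L p| <= 1) -> measurable_fun setT h -> (forall y, `|h y| <= 1) ->
  measurable_fun setT (Sf L h) /\ (forall x, `|Sf L h x| <= 1).
Proof.
move=> mL L1 mh h1.
have mf : measurable_fun setT (fun p => L p * h p.2).
  apply: measurable_funM => //; apply: measurableT_comp => //; exact: measurable_snd.
have fb : forall p, `|L p * h p.2| <= 1.
  by move=> p; rewrite normrM -[1]mulr1 ler_pM.
split; first exact: (mRint mf fb).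
move=> x; apply: (Rint_bound (measurable_fun_pair2 x mf)).
by move=> y; exact: (fb (x, y)).
Qed.

Lemma iSf (L : T * T -> R) (h : T -> R) : measurable_fun setT L ->
  (forall p, `|L p| <= 1) -> measurable_fun setT h -> (forall y, `|h y| <= 1) ->
  mu.-integrable setT (EFin \o (fun x => `|Sf L h x|)).
Proof.
move=> mL L1 mh h1; have [mS S1] := mSf mL L1 mh h1.
apply: (@bint _ 1); first exact: measurableT_comp.
by move=> x; rewrite normr_id.
Qed.

Lemma cut_elem (L : T * T -> R) (h : T -> R) : measurable_fun setT L ->
  (forall p, `|L p| <= 1) -> measurable_fun setT h -> (forall y, `|h y| <= 1) ->
  (\int[mu]_x `| \int[mu]_y (L (x, y) * h y)%:E |)%E = (\int[mu]_x `|Sf L h x|)%:E.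
Proof.
move=> mL L1 mh h1.
have mf : measurable_fun setT (fun p => L p * h p.2).
  apply: measurable_funM => //; apply: measurableT_comp => //; exact: measurable_snd.
have fb : forall p, `|L p * h p.2| <= 1.
  by move=> p; rewrite normrM -[1]mulr1 ler_pM.
transitivity (\int[mu]_x (`|Sf L h x|)%:E)%E.
  apply: eq_integral => x _.
  have ix : mu.-integrable setT (EFin \o (fun y => L (x, y) * h y)).
    apply: (@bint _ 1); first exact: (measurable_fun_pair2 x mf).
    by move=> y; exact: (fb (x, y)).
  have E : (\int[mu]_y (L (x, y) * h y)%:E)%E = (Sf L h x)%:E.
    by rewrite /Sf /Rintegral fineK //; exact: integrable_fin_num ix.
  by rewrite E.
by rewrite /Rintegral fineK //; exact: integrable_fin_num (iSf mL L1 mh h1).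
Qed.

Lemma cut_ub (L : T * T -> R) (h : T -> R) : measurable_fun setT L ->
  (forall p, `|L p| <= 1) -> measurable_fun setT h -> (forall y, `|h y| <= 1) ->
  ((\int[mu]_x `|Sf L h x|)%:E <= cut_norm_inf1 mu L)%E.
Proof.
move=> mL L1 mh h1; apply: ereal_sup_ubound.
by exists h; [split | exact: cut_elem].
Qed.

Lemma cut_fin (L : T * T -> R) : measurable_fun setT L ->
  (forall p, `|L p| <= 1) -> cut_norm_inf1 mu L \is a fin_num /\ 0 <= fine (cut_norm_inf1 mu L).
Proof.
move=> mL L1.
have h0 : ((\int[mu]_x `|Sf L (fun _ => 0) x|)%:E <= cut_norm_inf1 mu L)%E.
  by apply: cut_ub => // y; rewrite normr0.
have g0 : (0 <= cut_norm_inf1 mu L)%E.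
  apply: le_trans h0; rewrite lee_fin; apply: Rintegral_ge0 => x _; exact: normr_ge0.
have c1 : (cut_norm_inf1 mu L <= 1%:E)%E.
  apply: ge_ereal_sup => _ [h [mh h1] <-].
  rewrite (cut_elem mL L1 mh h1) lee_fin.
  have [mS S1] := mSf mL L1 mh h1.
  apply: le_trans (ler_norm _) _; apply: Rint_bound; first exact: measurableT_comp.
  by move=> x; rewrite normr_id.
have fc : cut_norm_inf1 mu L \is a fin_num by rewrite ge0_fin_numE // (le_lt_trans c1) ?ltry.
split => //; by rewrite fine_ge0.
Qed.

Lemma cut_ubR (L : T * T -> R) (h : T -> R) : measurable_fun setT L ->
  (forall p, `|L p| <= 1) -> measurable_fun setT h -> (forall y, `|h y| <= 1) ->
  \int[mu]_x `|Sf L h x| <= fine (cut_norm_inf1 mu L).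
Proof.
move=> mL L1 mh h1; have [fc _] := cut_fin mL L1.
by rewrite -lee_fin [X in (_ <= X)%E]fineK //; exact: (cut_ub mL L1 mh h1).
Qed.

Lemma Fcut (L : T * T -> R) (v : T -> R) (C : R) : measurable_fun setT L ->
  (forall p, `|L p| <= 1) -> measurable_fun setT v ->
  (forall h : T -> R, measurable_fun setT h -> (forall y, `|h y| <= 1) ->
     \int[mu]_x `|Sf L h x| <= C) ->
  \int[mu]_x `|kuramoto_field mu L v x| <= 2 * C.
Proof.
move=> mL L1 mv HC.
have msv : measurable_fun setT (fun y => sin (v y)).
  by apply: measurableT_comp => //; apply: continuous_measurable_fun; exact: continuous_sin.
have mcv : measurable_fun setT (fun y => cos (v y)).
  by apply: measurableT_comp => //; apply: continuous_measurable_fun; exact: continuous_cos.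
have sv1 : forall y, `|sin (v y)| <= 1 by move=> y; exact: sin_max.
have cv1 : forall y, `|cos (v y)| <= 1 by move=> y; exact: cos_max.
have [mSs Ss1] := mSf mL L1 msv sv1.
have [mSc Sc1] := mSf mL L1 mcv cv1.
have mf : forall h : T -> R, measurable_fun setT h -> measurable_fun setT (fun p => L p * h p.2).
  move=> h mh.
  apply: measurable_funM => //; apply: measurableT_comp => //; exact: measurable_snd.
have ix : forall (h : T -> R) x, measurable_fun setT h -> (forall y, `|h y| <= 1) ->
    mu.-integrable setT (EFin \o (fun y => L (x, y) * h y)).
  move=> h x mh h1; apply: (@bint _ 1); first exact: (measurable_fun_pair2 x (mf h mh)).
  by move=> y; rewrite normrM -[1]mulr1 ler_pM.
have Fx : forall x, kuramoto_field mu L v x = Sf L (fun y => sin (v y)) x * cos (v x)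
                    - Sf L (fun y => cos (v y)) x * sin (v x).
  move=> x; rewrite /kuramoto_field /Sf -!RintegralZr //; [|exact: ix|exact: ix].
  rewrite -RintegralB //; last first.
  - apply: (@bint _ 1).
      by apply: measurable_funM => //; exact: (measurable_fun_pair2 x (mf _ mcv)).
    by move=> y; rewrite !normrM -[1]mulr1 ler_pM // -[1]mulr1 ler_pM.
  - apply: (@bint _ 1).
      by apply: measurable_funM => //; exact: (measurable_fun_pair2 x (mf _ msv)).
    by move=> y; rewrite !normrM -[1]mulr1 ler_pM // -[1]mulr1 ler_pM.
  by apply: eq_Rintegral => y _; rewrite sinB; ring.
have iSs := iSf mL L1 msv sv1.
have iSc := iSf mL L1 mcv cv1.
apply: le_trans (le_Rintegral (f2 := fun x => `|Sf L (fun y => sin (v y)) x| +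
                                            `|Sf L (fun y => cos (v y)) x|) _ _ _ _) _ => //.
- apply: (@bint _ 1).
    by apply: measurableT_comp => //; exact: (Fmeas mL L1 mv).
  by move=> x; rewrite normr_id; exact: (Fbnd x mL L1 mv).
- exact: (integrableD measurableT iSs iSc).
- move=> x _; rewrite Fx; apply: le_trans (ler_normB _ _) _.
  rewrite !normrM lerD //.
    by rewrite -[X in _ <= X]mulr1 ler_wpM2l.
  by rewrite -[X in _ <= X]mulr1 ler_wpM2l.
rewrite RintegralD // mulr2n mulrDl mul1r lerD //; exact: HC.
Qed.

Lemma iB (f g : T -> R) : mu.-integrable setT (EFin \o f) ->
  mu.-integrable setT (EFin \o g) -> mu.-integrable setT (EFin \o (fun x => f x - g x)).
Proof. by move=> ff gg; apply: eq_integrable (integrableB measurableT ff gg) => // x _; rewrite /= ?EFinB ?EFinD. Qed.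

Lemma iD (f g : T -> R) : mu.-integrable setT (EFin \o f) ->
  mu.-integrable setT (EFin \o g) -> mu.-integrable setT (EFin \o (fun x => f x + g x)).
Proof. by move=> ff gg; apply: eq_integrable (integrableD measurableT ff gg) => // x _; rewrite /= ?EFinB ?EFinD. Qed.

Lemma iZ (f : T -> R) (k : R) : mu.-integrable setT (EFin \o f) ->
  mu.-integrable setT (EFin \o (fun x => f x * k)).
Proof. by move=> ff; apply: eq_integrable (integrableZr measurableT k ff) => // x _; rewrite /= EFinM. Qed.

Lemma iZl (f : T -> R) (k : R) : mu.-integrable setT (EFin \o f) ->
  mu.-integrable setT (EFin \o (fun x => k * f x)).
Proof. by move=> ff; apply: eq_integrable (integrableZl measurableT k ff) => // x _; rewrite /= EFinM. Qed.

Lemma iA (f : T -> R) : mu.-integrable setT (EFin \o f) ->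
  mu.-integrable setT (EFin \o (fun x => `|f x|)).
Proof. exact: integrable_norm. Qed.

Lemma iC (k : R) : mu.-integrable setT (EFin \o (fun _ : T => k)).
Proof. by apply: (@bint _ `|k|). Qed.

Lemma RintC (k : R) : Rintegral mu setT (fun _ : T => k) = k.
Proof.
rewrite Rintegral_cst // [fine _](_ : _ = 1) ?mulr1 //.
exact: (f_equal fine (probability_setT mu)).
Qed.

Lemma mI (f : T -> R) : mu.-integrable setT (EFin \o f) -> measurable_fun setT f.
Proof. by move=> /(measurable_int mu) /measurable_EFinP. Qed.

Section P.
Variable phi : T -> T.
Hypothesis mphi : measurable_fun setT phi.
Hypothesis mp : forall A, measurable A -> mu (phi @^-1` A) = mu A.

Lemma cv_ge0 (g : T -> \bar R) : measurable_fun setT g -> (forall x, 0 <= g x)%E ->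
  (\int[mu]_x g (phi x) = \int[mu]_x g x)%E.
Proof.
move=> mg g0.
rewrite [RHS](eq_measure_integral (pushforward mu phi)); last first.
  by move=> A mA _; exact: (esym (mp mA)).
by rewrite ge0_integral_pushforward // preimage_setT.
Qed.

Lemma cv_int (g : T -> \bar R) : mu.-integrable setT g ->
  (\int[mu]_x g (phi x) = \int[mu]_x g x)%E.
Proof.
move=> ig.
have mg := measurable_int mu ig.
have ig' : mu.-integrable (phi @^-1` setT) (g \o phi).
  rewrite preimage_setT; apply/integrableP; split.
    exact: measurableT_comp.
  have := cv_ge0 (measurableT_comp (@abse_measurable _ setT) mg) (fun x => abse_ge0 _).
  move=> /= ->; by case/integrableP: ig.
rewrite [RHS](eq_measure_integral (pushforward mu phi)); last first.
  by move=> A mA _; exact: (esym (mp mA)).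
by rewrite integral_pushforward // preimage_setT.
Qed.

Lemma cvR (g : T -> R) : mu.-integrable setT (EFin \o g) ->
  \int[mu]_x g (phi x) = \int[mu]_x g x.
Proof. by move=> ig; rewrite /Rintegral (cv_int ig). Qed.



Hypothesis (psi : T -> T) (mpsi : measurable_fun setT psi)
  (phiK : cancel phi psi) (psiK : cancel psi phi).

Lemma int_comp (g : T -> R) : mu.-integrable setT (EFin \o g) ->
  mu.-integrable setT (EFin \o (fun x => g (phi x))).
Proof.
move=> ig; have mg := measurable_int mu ig.
apply/integrableP; split.
  by apply/measurable_EFinP; apply: measurableT_comp => //; exact/measurable_EFinP.
have := cv_ge0 (measurableT_comp (@abse_measurable _ setT) mg) (fun x => abse_ge0 _).
move=> /= ->; by case/integrableP: ig.
Qed.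

Lemma Fcomp (K : T * T -> R) M (v : T -> R) x : measurable_fun setT K ->
  (forall p, `|K p| <= M) -> measurable_fun setT v ->
  kuramoto_field mu K v (phi x) =
  kuramoto_field mu (fun p => K (phi p.1, phi p.2)) (fun y => v (phi y)) x.
Proof.
move=> mK KM mv; rewrite /kuramoto_field -(cvR (isec (phi x) mK KM mv)) //.
Qed.

Lemma cut_phi (L : T * T -> R) (h : T -> R) : measurable_fun setT L ->
  (forall p, `|L p| <= 1) -> measurable_fun setT h -> (forall y, `|h y| <= 1) ->
  \int[mu]_x `|Sf (fun p => L (phi p.1, phi p.2)) h x| <= fine (cut_norm_inf1 mu L).
Proof.
move=> mL L1 mh h1.
have mhp : measurable_fun setT (fun y => h (psi y)) by exact: measurableT_comp.
have hp1 : forall y, `|h (psi y)| <= 1 by move=> y; exact: h1.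
have mf : measurable_fun setT (fun p => L p * h (psi p.2)).
  apply: measurable_funM => //; apply: (measurableT_comp mhp); exact: measurable_snd.
have E : forall x, Sf (fun p => L (phi p.1, phi p.2)) h x = Sf L (fun y => h (psi y)) (phi x).
  move=> x; rewrite /Sf.
  have ix : mu.-integrable setT (EFin \o (fun y => L (phi x, y) * h (psi y))).
    apply: (@bint _ 1); first exact: (measurable_fun_pair2 (phi x) mf).
    by move=> y; rewrite normrM -[1]mulr1 ler_pM.
  rewrite -(cvR ix) /=.
  by apply: eq_Rintegral => y _; rewrite phiK.
under eq_Rintegral do rewrite E.
rewrite (cvR (iSf mL L1 mhp hp1)).
exact: cut_ubR.
Qed.

Lemma mpp : measurable_fun setT (fun p : T * T => (phi p.1, phi p.2)).
Proof.
apply: measurable_fun_pair.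
  by apply: measurableT_comp => //; exact: measurable_fst.
by apply: measurableT_comp => //; exact: measurable_snd.
Qed.

Lemma Gbound (K W : T * T -> R) (a : T -> R) :
  measurable_fun setT K -> measurable_fun setT W ->
  (forall p, 0 <= K p <= 1) -> (forall p, 0 <= W p <= 1) ->
  (forall x, {ae mu, forall y, W (phi x, phi y) = W (x, y)}) ->
  mu.-integrable setT (EFin \o a) ->
  \int[mu]_x `|kuramoto_field mu K a (phi x) - kuramoto_field mu K a x| <=
  2 * \int[mu]_x `|a (phi x) - a x| + 4 * fine (cut_norm_inf1 mu (fun p => K p - W p)).
Proof.
move=> mK mW K01 W01 hW ia.
have ma := mI ia.
have K1 : forall p, `|K p| <= 1.
  by move=> p; have /andP[h1 h2] := K01 p; rewrite ger0_norm.
have W1 : forall p, `|W p| <= 1.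
  by move=> p; have /andP[h1 h2] := W01 p; rewrite ger0_norm.
pose L := fun p => K p - W p.
have mL : measurable_fun setT L by exact: measurable_funB.
have L1 : forall p, `|L p| <= 1.
  move=> p; have /andP[h1 h2] := K01 p; have /andP[h3 h4] := W01 p.
  rewrite ler_norml /L; apply/andP; split; lra.
pose Kp := fun p : T * T => K (phi p.1, phi p.2).
pose Wp := fun p : T * T => W (phi p.1, phi p.2).
pose Lp := fun p : T * T => L (phi p.1, phi p.2).
have mKp : measurable_fun setT Kp by exact: measurableT_comp mK mpp.
have mWp : measurable_fun setT Wp by exact: measurableT_comp mW mpp.
have mLp : measurable_fun setT Lp by exact: measurableT_comp mL mpp.
have Kp1 : forall p, `|Kp p| <= 1 by move=> p; exact: K1.
have Wp1 : forall p, `|Wp p| <= 1 by move=> p; exact: W1.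
have Lp1 : forall p, `|Lp p| <= 1 by move=> p; exact: L1.
pose ap := fun y => a (phi y).
have iap : mu.-integrable setT (EFin \o ap) by exact: int_comp.
have map := mI iap.
have idf := iB iap ia.
pose D := \int[mu]_x `|ap x - a x|.
pose C := fine (cut_norm_inf1 mu L).
have pw : forall x, `|kuramoto_field mu K a (phi x) - kuramoto_field mu K a x| <=
    (D + `|ap x - a x|) + (`|kuramoto_field mu Lp a x| + `|kuramoto_field mu L a x|).
  move=> x; rewrite (Fcomp x mK K1 ma).
  have e1 : kuramoto_field mu Kp ap x - kuramoto_field mu K a x =
     (kuramoto_field mu Kp ap x - kuramoto_field mu Kp a x) +
     (kuramoto_field mu Kp a x - kuramoto_field mu Wp a x) -
     (kuramoto_field mu K a x - kuramoto_field mu Wp a x) by ring.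
  rewrite e1 (Flin x mKp mWp Kp1 Wp1 ma).
  rewrite (Fae mWp mW Wp1 W1 ma (hW x)) (Flin x mK mW K1 W1 ma).
  apply: le_trans (ler_normB _ _) _; rewrite addrA lerD //.
  apply: le_trans (ler_normD _ _) _; rewrite lerD //.
  exact: (Flip x mKp Kp1 map ma idf).
have mF := Fmeas mK K1 ma.
apply: le_trans (le_Rintegral _ _ _ (fun x _ => pw x)) _ => //.
- apply: (@bint _ 2).
    apply: measurableT_comp => //; apply: measurable_funB => //.
    exact: measurableT_comp mF mphi.
  move=> x; rewrite normr_id; apply: le_trans (ler_normB _ _) _.
  by rewrite -[2]/(1 + 1) lerD // (Fbnd _ mK K1 ma).
- apply: iD; first exact: iD (iC _) (iA idf).
  apply: iD.
    apply: (@bint _ 1); first by apply: measurableT_comp => //; exact: Fmeas mLp Lp1 ma.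
    by move=> x; rewrite normr_id (Fbnd _ mLp Lp1 ma).
  apply: (@bint _ 1); first by apply: measurableT_comp => //; exact: Fmeas mL L1 ma.
  by move=> x; rewrite normr_id (Fbnd _ mL L1 ma).
rewrite RintegralD //; last first.
- apply: iD.
    apply: (@bint _ 1); first by apply: measurableT_comp => //; exact: Fmeas mLp Lp1 ma.
    by move=> x; rewrite normr_id (Fbnd _ mLp Lp1 ma).
  apply: (@bint _ 1); first by apply: measurableT_comp => //; exact: Fmeas mL L1 ma.
  by move=> x; rewrite normr_id (Fbnd _ mL L1 ma).
- exact: iD (iC _) (iA idf).
rewrite RintegralD //; [|exact: iC|exact: iA idf].
rewrite RintegralD //; last first.
- apply: (@bint _ 1); first by apply: measurableT_comp => //; exact: Fmeas mL L1 ma.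
  by move=> x; rewrite normr_id (Fbnd _ mL L1 ma).
- apply: (@bint _ 1); first by apply: measurableT_comp => //; exact: Fmeas mLp Lp1 ma.
  by move=> x; rewrite normr_id (Fbnd _ mLp Lp1 ma).
rewrite RintC.
have H1 : \int[mu]_x `|kuramoto_field mu Lp a x| <= 2 * C.
  apply: (Fcut mLp Lp1 ma) => h mh h1; exact: cut_phi.
have H2 : \int[mu]_x `|kuramoto_field mu L a x| <= 2 * C.
  apply: (Fcut mL L1 ma) => h mh h1; exact: cut_ubR.
rewrite -/D -/C; lra.
Qed.

Definition Dphi (a : R -> T -> R) (s : R) := \int[mu]_x `|a s (phi x) - a s x|.

Lemma near0 (rho : R -> \bar R) : rho @ 0^' --> 0%E ->
  forall e : R, 0 < e -> exists2 eta : R, 0 < eta &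
    forall h : R, `|h| < eta -> h != 0 -> fine (rho h) < e.
Proof.
move=> /fine_cvgP [_ H] e e0.
move/cvgrPdist_lt : H => /(_ e e0).
rewrite near_withinE => /nbhs_ballP [eta eta0 Hb].
exists eta => // h hl h0.
have := Hb h; rewrite /ball /= sub0r normrN => /(_ hl h0).
by rewrite sub0r normrN => /(le_lt_trans (ler_norm _)).
Qed.

Lemma step (K W : T * T -> R) (a : R -> T -> R) (t : R) :
  measurable_fun setT K -> measurable_fun setT W ->
  (forall p, 0 <= K p <= 1) -> (forall p, 0 <= W p <= 1) ->
  (forall x, {ae mu, forall y, W (phi x, phi y) = W (x, y)}) ->
  kuramoto_trajectory mu K a ->
  forall e, 0 < e -> exists2 eta, 0 < eta & forall h, `|h| < eta ->
    `|Dphi a (t + h) - Dphi a t| <=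
      `|h| * (2 * Dphi a t + 4 * fine (cut_norm_inf1 mu (fun p => K p - W p)) + e).
Proof.
move=> mK mW K01 W01 hW [ia hd] e e0.
have K1 : forall p, `|K p| <= 1.
  by move=> p; have /andP[h1 h2] := K01 p; rewrite ger0_norm.
pose F := kuramoto_field mu K (a t).
have ma : forall s, measurable_fun setT (a s) by move=> s; exact: mI.
have mF : measurable_fun setT F := Fmeas mK K1 (ma t).
have F1 : forall x, `|F x| <= 1 by move=> x; exact: (Fbnd x mK K1 (ma t)).
have iF : mu.-integrable setT (EFin \o F) by exact: (bint mF F1).
have e2 : 0 < e / 2 by rewrite divr_gt0.
have [eta eta0 Heta] := near0 (hd t) e2.
exists eta => // h hl.
have [->|h0] := eqVneq h 0.
  by rewrite addr0 subrr !normr0 mul0r.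
pose r := fun x => (a (t + h) x - a t x) / h - F x.
have ir : mu.-integrable setT (EFin \o r).
  by apply: iB => //; apply: iZ; apply: iB.
have rho : \int[mu]_x `|r x| < e / 2 by exact: (Heta h hl h0).
have ide : forall y, a (t + h) y = a t y + h * (F y + r y).
  by move=> y; rewrite /r; field.
have iAs : forall s, mu.-integrable setT (EFin \o (fun x => a s (phi x) - a s x)).
  by move=> s; apply: iB => //; exact: int_comp.
pose G := fun x => F (phi x) - F x.
have mG : measurable_fun setT G.
  by apply: measurable_funB => //; exact: measurableT_comp mF mphi.
have iG : mu.-integrable setT (EFin \o (fun x => `|G x|)).
  apply: (@bint _ 2); first exact: measurableT_comp.
  move=> x; rewrite normr_id; apply: le_trans (ler_normB _ _) _.
  by rewrite -[2]/(1 + 1) lerD.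
have irp : mu.-integrable setT (EFin \o (fun x => `|r (phi x)|)) by exact/iA/int_comp.
have pw : forall x, `| `|a (t + h) (phi x) - a (t + h) x| - `|a t (phi x) - a t x| | <=
    `|h| * (`|G x| + (`|r (phi x)| + `|r x|)).
  move=> x; apply: le_trans (ler_dist_dist _ _) _.
  rewrite !ide.
  have -> : a t (phi x) + h * (F (phi x) + r (phi x)) - (a t x + h * (F x + r x)) -
     (a t (phi x) - a t x) = h * G x + h * (r (phi x) - r x) by rewrite /G; ring.
  apply: le_trans (ler_normD _ _) _; rewrite !normrM mulrDr lerD //.
  by rewrite ler_wpM2l // ler_normB.
rewrite /Dphi -RintegralB //; [|exact: iA|exact: iA].
apply: le_trans (le_normr_Rintegral _ _) _ => //; first by apply: iB; exact: iA.
apply: le_trans (le_Rintegral _ _ _ (fun x _ => pw x)) _ => //.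
- by apply: iA; apply: iB; exact: iA.
- by apply: iZl; apply: iD => //; exact: (iD irp (iA ir)).
have E := cvR (iA ir); rewrite /= in E.
rewrite RintegralZl //; last by apply: iD => //; exact: (iD irp (iA ir)).
rewrite RintegralD //; last exact: (iD irp (iA ir)).
rewrite RintegralD //; last exact: iA.
rewrite E.
have Gb := Gbound mK mW K01 W01 hW (ia t).
apply: ler_wpM2l => //.
have Gb' : \int[mu]_x `|G x| <= 2 * \int[mu]_x `|a t (phi x) - a t x| +
    4 * fine (cut_norm_inf1 mu (fun p => K p - W p)) := Gb.
move: Gb' rho.
move: (\int[mu]_x `|G x|) (\int[mu]_x `|r x|) (\int[mu]_x `|a t (phi x) - a t x|)
  (fine (cut_norm_inf1 mu (fun p => K p - W p))) => A B C0 C1.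
move=> H1 H2; lra.
Qed.

End P.
End M.


Section Tl.
Context {R : realType} {d : measure_display} {T : measurableType d}.
Variable mu : probability T R.
Variables (phi psi : T -> T).
Hypotheses (mphi : measurable_fun setT phi)
  (mp : forall A, measurable A -> mu (phi @^-1` A) = mu A)
  (mpsi : measurable_fun setT psi) (phiK : cancel phi psi) (psiK : cancel psi phi).

Lemma L1D (a : T -> R) : mu.-integrable setT (EFin \o a) ->
  L1dist mu (a \o phi) a = (\int[mu]_x `|a (phi x) - a x|)%:E.
Proof.
move=> ia; rewrite /L1dist /Rintegral fineK //.
exact: integrable_fin_num (iA (iB (int_comp mphi mp ia) ia)).
Qed.

Lemma Rint_ae0 (f : T -> R) : measurable_fun setT f -> {ae mu, forall x, f x = 0} ->
  \int[mu]_x f x = 0.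
Proof.
move=> mf hf; rewrite /Rintegral (ae_eq_integral (cst 0%E)) //.
- by rewrite integral0.
- exact/measurable_EFinP.
by apply: filterS hf => x /= -> _.
Qed.

Lemma D0bound (a0 u0 : T -> R) : mu.-integrable setT (EFin \o a0) ->
  mu.-integrable setT (EFin \o u0) -> {ae mu, forall x, u0 (phi x) = u0 x} ->
  \int[mu]_x `|a0 (phi x) - a0 x| <= 2 * \int[mu]_x `|a0 x - u0 x|.
Proof.
move=> ia iu hu.
have i1 := iB ia iu.
have i1p : mu.-integrable setT (EFin \o (fun x => `|a0 (phi x) - u0 (phi x)|)).
  exact: (iA (int_comp mphi mp i1)).
have i2 : mu.-integrable setT (EFin \o (fun x => `|u0 (phi x) - u0 x|)).
  exact: (iA (iB (int_comp mphi mp iu) iu)).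
apply: le_trans (le_Rintegral (f2 := fun x => `|a0 (phi x) - u0 (phi x)| +
   (`|u0 (phi x) - u0 x| + `|a0 x - u0 x|)) _ _ _ _) _ => //.
- exact: (iA (iB (int_comp mphi mp ia) ia)).
- exact: (iD i1p (iD i2 (iA i1))).
- move=> x _.
  have -> : a0 (phi x) - a0 x = (a0 (phi x) - u0 (phi x)) + ((u0 (phi x) - u0 x) - (a0 x - u0 x)) by ring.
  apply: le_trans (ler_normD _ _) _; rewrite lerD //.
  exact: ler_normB.
rewrite RintegralD //; last exact: (iD i2 (iA i1)).
rewrite RintegralD //; last exact: (iA i1).
have E := cvR mphi mp (iA i1); rewrite /= in E.
rewrite E (Rint_ae0 (f := fun x => `|u0 (phi x) - u0 x|)).
- by rewrite add0r mulr2n mulrDl mul1r.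
- apply: measurableT_comp => //; apply: measurable_funB => //.
    exact: (measurableT_comp (mI iu) mphi).
  exact: (mI iu).
by apply: filterS hu => x /= ->; rewrite subrr normr0.
Qed.

Lemma evN (f : nat -> \bar R) : f @ \oo --> 0%E -> forall e : R, 0 < e ->
  exists N, forall n, (N <= n)%N -> fine (f n) < e.
Proof.
move=> /fine_cvgP [_ /cvgrPdist_lt H] e e0.
have [N _ HN] := H e e0.
exists N => n Nn; have := HN n Nn; rewrite sub0r normrN /=.
exact: le_lt_trans (ler_norm _).
Qed.

Lemma mainP (W : T * T -> R) (Wn : nat -> T * T -> R) (un : nat -> R -> T -> R) (u0 : T -> R) :
  measurable_fun setT W -> (forall p, 0 <= W p <= 1) ->
  (forall x, {ae mu, forall y, W (phi x, phi y) = W (x, y)}) ->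
  mu.-integrable setT (EFin \o u0) ->
  {ae mu, forall x, u0 (phi x) = u0 x} ->
  (forall n, measurable_fun setT (Wn n)) -> (forall n p, 0 <= Wn n p <= 1) ->
  (forall n, kuramoto_trajectory mu (Wn n) (un n)) ->
  (fun n => cut_norm_inf1 mu (fun p => Wn n p - W p)) @ \oo --> 0%E ->
  (fun n => L1dist mu (un n 0) u0) @ \oo --> 0%E ->
  forall Tm eps : R, 0 < eps -> exists N : nat, forall n, (N <= n)%N ->
    forall t, -Tm <= t <= Tm -> Dphi mu phi (un n) t < eps.
Proof.
move=> mW W01 hW iu0 inv0 mWn Wn01 trajn hcut hL1 Tm eps eps0.
pose E := expR (3 * Tm).
have E0 : 0 < E := expR_gt0 _.
pose dl := eps / (24 * E).
have dl0 : 0 < dl by rewrite divr_gt0 // mulr_gt0.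
have [N1 HN1] := evN hL1 dl0.
have [N2 HN2] := evN hcut dl0.
exists (maxn N1 N2) => n Nn t /andP[t1 t2].
have n1 : (N1 <= n)%N by apply: leq_trans (leq_maxl _ _) Nn.
have n2 : (N2 <= n)%N by apply: leq_trans (leq_maxr _ _) Nn.
have En : \int[mu]_x `|un n 0 x - u0 x| < dl := HN1 n n1.
have Cn : fine (cut_norm_inf1 mu (fun p => Wn n p - W p)) < dl := HN2 n n2.
have [iun _] := trajn n.
have L1 : forall p, `|Wn n p - W p| <= 1.
  move=> p; have /andP[h1 h2] := Wn01 n p; have /andP[h3 h4] := W01 p.
  rewrite ler_norml; apply/andP; split; lra.
have [_ Cn0] := cut_fin mu (measurable_funB (mWn n) mW) L1.
move: Cn Cn0; set C := fine _ => Cn Cn0.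
have c0 : 0 < 4 * C + dl by lra.
have G := @gronwall _ (Dphi mu phi (un n)) 2 (4 * C + dl) (ler0n _ 2) c0.
have D00 : forall s, 0 <= Dphi mu phi (un n) s.
  by move=> s; apply: Rintegral_ge0 => x _; exact: normr_ge0.
have /(_ D00) := G.
have Hst : forall s e, 0 < e -> exists2 eta, 0 < eta & forall h, `|h| < eta ->
    `|Dphi mu phi (un n) (s + h) - Dphi mu phi (un n) s| <=
    `|h| * (2 * Dphi mu phi (un n) s + (4 * C + dl) + e).
  move=> s e e0.
  have [eta eta0 He] := step mphi mp mpsi phiK s (mWn n) mW (Wn01 n) W01 hW (trajn n) e0.
  exists eta => // h hl; apply: le_trans (He h hl) _.
  rewrite ler_wpM2l // -/C.
  move: (Dphi mu phi (un n) s) => X; lra.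
move=> /(_ Hst t) Gt.
have D0 := D0bound (iun 0) iu0 inv0.
have Et : expR ((2 + 1) * `|t|) <= E.
  rewrite /E ler_expR.
  have : `|t| <= Tm by rewrite ler_norml t1 t2.
  lra.
have B0 : 0 <= Dphi mu phi (un n) 0 + 2 * (4 * C + dl) by have := D00 0; lra.
apply: le_lt_trans Gt _.
apply: le_lt_trans (ler_pM B0 (expR_ge0 _) (lexx _) Et) _.
have B1 : Dphi mu phi (un n) 0 + 2 * (4 * C + dl) <= 12 * dl.
  rewrite /Dphi; move: D0 En Cn; move: (\int[mu]_x _) (\int[mu]_x _) => X Y.
  lra.
apply: le_lt_trans (ler_pM B0 (ltW E0) B1 (lexx _)) _.
have H : 12 * dl * E = eps / 2.
  by rewrite /dl; field; rewrite gt_eqF.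
rewrite H; lra.
Qed.

End Tl.

Unset Implicit Arguments.

Theorem corollary6p3 (R : realType) (d : measure_display) (T : measurableType d)
  (mu : probability T R) (W : T * T -> R) (phi : T -> T) (u : R -> T -> R)
  (Wn : nat -> T * T -> R) (un : nat -> R -> T -> R) :
  is_graphon W ->
  graphon_automorphism mu W phi ->
  kuramoto_trajectory mu W u ->
  {ae mu, forall x, u 0 (phi x) = u 0 x} ->
  (forall n, is_graphon (Wn n)) ->
  (forall n, kuramoto_trajectory mu (Wn n) (un n)) ->
  (fun n => cut_norm_inf1 mu (fun p => Wn n p - W p)) @ \oo --> 0%E ->
  (fun n => L1dist mu (un n 0) (u 0)) @ \oo --> 0%E ->
  (forall t : R,
     (fun n => L1dist mu (un n t \o phi) (un n t)) @ \oo --> 0%E) /\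
  (forall Tm : R, forall eps : R, 0 < eps ->
     exists N : nat, forall n, (N <= n)%N -> forall t : R, -Tm <= t <= Tm ->
       (L1dist mu (un n t \o phi) (un n t) < eps%:E)%E).
Proof.
move=> [mW [_ W01]] [[[psi [phiK [psiK mpsi]]] [mphi mp]] hW] [iu _] inv0 gWn trajn hcut hL1.
have W01' : forall p, 0 <= W p <= 1 by case=> x y; exact: W01.
have mWn : forall n, measurable_fun setT (Wn n) by move=> n; case: (gWn n).
have Wn01 : forall n p, 0 <= Wn n p <= 1.
  by move=> n [x y]; case: (gWn n) => _ [_]; apply.
have M := mainP mphi mp mpsi phiK mW W01' hW (iu 0) inv0 mWn Wn01 trajn hcut hL1.
have L1E : forall n t, L1dist mu (un n t \o phi) (un n t) = (Dphi mu phi (un n) t)%:E.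
  by move=> n t; have [iun _] := trajn n; exact: (L1D mphi mp (iun t)).
split.
- move=> t.
  rewrite (_ : (fun n => L1dist mu (un n t \o phi) (un n t)) =
               (fun n => (Dphi mu phi (un n) t)%:E)); last by apply: funext => n; exact: L1E.
  apply/fine_cvgP; split; first exact: nearW.
  apply/cvgrPdist_lt => e e0.
  have [N HN] := M `|t| e e0.
  exists N => // n /= Nn; rewrite sub0r normrN ger0_norm.
    by apply: HN => //; rewrite -ler_norml.
  by apply: Rintegral_ge0 => x _; exact: normr_ge0.
- move=> Tm eps eps0; have [N HN] := M Tm eps eps0.
  by exists N => n Nn t Ht; rewrite L1E lte_fin; exact: HN.
Qed.
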